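(* Let $1\le p\le q$, $n=p+q$, and let $\mu=(a_1,\dots,a_p\mid b_1,\dots,b_q)$ be a $\Delta^+(\mathfrak{k},\mathfrak{t})$-dominant weight with non-negative integer entries. Then the following are equivalent: (i) there exist $w\in W(\mathfrak{g},\mathfrak{t})^1$ and $1\le i\le n$ with $\langle\mu+2\rho_c,w\xi_i\rangle>2\langle\rho,\xi_i\rangle$ (i.e. $\mu$ is u-large); (ii) there exist $0\le f\le p$ and $0\le g\le q$ such that $$\sum_{i=1}^f a_i+\sum_{j=1}^g b_j>2pq-2(p-f)(q-g).$$
   Context: Weights are vectors in $\mathbb{R}^n$ written $(x_1,\dots,x_p\mid y_1,\dots,y_q)$ with the standard inner product. $\rho_c=(p,p-1,\dots,1\mid q,q-1,\dots,1)$, $\rho=(n,n-1,\dots,1)$, $\xi_i=e_1+\cdots+e_i$. A weight is $\Delta^+(\mathfrak{k},\mathfrak{t})$-dominant if $x_1\ge\cdots\ge x_p\ge0$ and $y_1\ge\cdots\ge y_q\ge0$. $W(\mathfrak{g},\mathfrak{t})$ is the group of signed permutations of the $n$ coordinates; $C_{\mathfrak{g}}=\{z\in\mathbb{R}^n: z_1\ge\cdots\ge z_n\ge0\}$, $C$ is the closed cone of $\Delta^+(\mathfrak{k},\mathfrak{t})$-dominant weights, and $W(\mathfrak{g},\mathfrak{t})^1=\{w\in W(\mathfrak{g},\mathfrak{t})\mid w(C_{\mathfrak{g}})\subset C\}$. A weight $\nu$ is u-small (lies in the unitarily small convex hull) iff $\langle\nu+2\rho_c,w\xi_i\rangle\le2\langle\rho,\xi_i\rangle$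 for all $1\le i\le n$ and all $w\in W(\mathfrak{g},\mathfrak{t})^1$; u-large means not u-small. *)

(* Defs.v *)
From HB Require Import structures.
From mathcomp Require Import all_boot all_order all_algebra all_fingroup.
From mathcomp Require Import reals.
 Unset Printing Implicit Defensive.
Import Order.TTheory GRing.Theory Num.Theory.
Local Open Scope ring_scope.

(* Weights in R^n are functions 'I_n -> R; coordinate k (0-based) is
   e_{k+1}.  With n = p + q, coordinates k < p are the x-part, k >= p the
   y-part. *)

Definition dotw (n : nat) (R : realType) (x y : 'I_n -> R) : R :=
  \sum_(k < n) x k * y k.

Definition rho_c (p q : nat) (R : realType) : 'I_(p + q) -> R :=
  fun k => if (k < p)%N then (p - k)%:R else (p + q - k)%:R.

Definition rho (n : nat) (R : realType) : 'I_n -> R := fun k => (n - k)%:R.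

Definition xi (n i : nat) (R : realType) : 'I_n -> R :=
  fun k => if (k < i)%N then 1 else 0.

(* W(g,t): signed permutations of the n coordinates, as maps on R^n *)
Definition signed_perm (n : nat) (R : realType)
    (w : ('I_n -> R) -> ('I_n -> R)) : Prop :=
  exists (s : 'S_n) (eps : 'I_n -> bool),
    forall (z : 'I_n -> R) (k : 'I_n), w z k = (-1) ^+ eps k * z (s k).

Definition in_Cg (n : nat) (R : realType) (z : 'I_n -> R) : Prop :=
  (forall i j : 'I_n, (i <= j)%N -> z j <= z i) /\ (forall i, 0 <= z i).

Definition k_dominant (p q : nat) (R : realType) (z : 'I_(p + q) -> R) : Prop :=
  (forall i j : 'I_(p + q), (i <= j)%N -> ((i < p) = (j < p))%N -> z j <= z i)
  /\ (forall i, 0 <= z i).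

Definition W1 (p q : nat) (R : realType)
    (w : ('I_(p + q) -> R) -> ('I_(p + q) -> R)) : Prop :=
  signed_perm (p + q) R w /\ forall z, in_Cg (p + q) R z -> k_dominant p q R (w z).

Definition weight_of (p q : nat) (R : realType) (a : 'I_p -> nat)
    (b : 'I_q -> nat) : 'I_(p + q) -> R :=
  fun k => match split k with inl i => (a i)%:R | inr j => (b j)%:R end.

Definition addw (n : nat) (R : realType) (x y : 'I_n -> R) : 'I_n -> R :=
  fun k => x k + y k.
Definition scalew (n : nat) (R : realType) (c : R) (x : 'I_n -> R) : 'I_n -> R :=
  fun k => c * x k.

(* Main.v *)
Require Import Defs.
From HB Require Import structures.
From mathcomp Require Import all_boot all_order all_algebra all_fingroup.
From mathcomp Require Import reals ring lra zify.
Import Order.TTheory GRing.Theory Num.Theory.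
Local Open Scope ring_scope.
Section S.
Variable R : realType.

Lemma wl p q a b (k : 'I_p) : weight_of p q R a b (lshift q k) = (a k)%:R.
Proof. by rewrite /weight_of (unsplitK (inl k)). Qed.
Lemma wr p q a b (k : 'I_q) : weight_of p q R a b (rshift p k) = (b k)%:R.
Proof. by rewrite /weight_of (unsplitK (inr k)). Qed.
Lemma rcl p q (k : 'I_p) : rho_c p q R (lshift q k) = (p - k)%:R.
Proof. by rewrite /rho_c /= ltn_ord. Qed.
Lemma rcr p q (k : 'I_q) : rho_c p q R (rshift p k) = (q - k)%:R.
Proof. rewrite /rho_c /= ltnNge leq_addr /=; congr (_%:R); lia. Qed.

Lemma cnt_le (P : pred nat) p : (\sum_(0 <= k < p | P k) 1 <= p)%N.
Proof.
elim: p => [|p IH]; first by rewrite big_geq.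
rewrite big_mkcond big_nat_recr //= -big_mkcond; case: (P p) => /=; lia.
Qed.

Lemma lemA (c : nat -> R) (P : pred nat) p :
  (forall i j, (i <= j)%N -> (j < p)%N -> c j <= c i) ->
  \sum_(0 <= k < p | P k) c k <= \sum_(0 <= k < \sum_(0 <= k < p | P k) 1) c k.
Proof.
elim: p => [|p IH] Hc; first by rewrite !big_geq.
have IH' := IH (fun i j h1 h2 => Hc i j h1 (ltnW h2)).
rewrite big_mkcond big_nat_recr //= -big_mkcond.
rewrite [X in (_ <= \sum_(0 <= k < X) _)]big_mkcond big_nat_recr //= -big_mkcond.
case: (P p) => /=; last by rewrite addr0 addn0.
rewrite addn1 big_nat_recr //=; apply: lerD => //.
by apply: Hc => //; apply: cnt_le.
Qed.

Lemma tri p f : (f <= p)%N ->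
  \sum_(0 <= k < f) (2 * (p - k)%:R) = f%:R * (2 * p%:R - f%:R + 1) :> R.
Proof.
elim: f => [|f IH] H; first by rewrite big_geq // mul0r.
rewrite big_nat_recr //= IH ?(ltnW H) // natrB ?(ltnW H) // -addn1 natrD; ring.
Qed.

Lemma sum_ord_lt (G : nat -> R) f p : (f <= p)%N ->
  \sum_(k < p | (k < f)%N) G k = \sum_(0 <= k < f) G k.
Proof. by move=> H; rewrite (big_nat_widen 0 f p) // big_mkord. Qed.

Lemma sum_ord_ltn (G : nat -> nat) f p : (f <= p)%N ->
  (\sum_(k < p | (k < f)%N) G k = \sum_(0 <= k < f) G k)%N.
Proof. by move=> H; rewrite (big_nat_widen 0 f p) // big_mkord. Qed.

Lemma lemA' p (c : 'I_p -> R) (P : pred 'I_p) :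
  (forall i j : 'I_p, (i <= j)%N -> c j <= c i) ->
  \sum_(k < p | P k) c k <= \sum_(k < p | (k < \sum_(k < p | P k) 1)%N) c k.
Proof.
move=> Hc.
pose cn k := if @insub _ _ 'I_p k is Some o then c o else 0.
pose Pn k := if @insub _ _ 'I_p k is Some o then P o else false.
have E1 : \sum_(k < p | P k) c k = \sum_(0 <= k < p | Pn k) cn k.
  by rewrite big_mkord; apply: eq_big => k; rewrite /cn /Pn valK.
have E2 : (\sum_(k < p | P k) 1 = \sum_(0 <= k < p | Pn k) 1)%N.
  by rewrite big_mkord; apply: eq_bigl => k; rewrite /Pn valK.
have E3 : \sum_(k < p | (k < \sum_(k < p | P k) 1)%N) c k =
          \sum_(k < p | (k < \sum_(k < p | P k) 1)%N) cn k.
  by apply: eq_bigr => k _; rewrite /cn valK.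
rewrite E3 E1 E2 sum_ord_lt ?cnt_le //.
apply: lemA => i j hij hj.
have hi : (i < p)%N by apply: leq_ltn_trans hj.
by rewrite /cn (insubT (fun k => k < p)%N hi) (insubT (fun k => k < p)%N hj); apply: Hc.
Qed.
Lemma int_R (S p q f g : nat) :
  ((2 * p%:Z * q%:Z - 2 * (p%:Z - f%:Z) * (q%:Z - g%:Z) < S%:Z)%R) <->
  (2 * p%:R * q%:R - 2 * (p%:R - f%:R) * (q%:R - g%:R) < S%:R :> R).
Proof.
rewrite -(ltr_int R) !(rmorphB, rmorphM) /= -!pmulrn.
by [].
Qed.

Lemma xpart p (a : 'I_p -> nat) f : (f <= p)%N ->
  \sum_(k < p | (k < f)%N) ((a k)%:R + 2 * (p - k)%:R) =
  (\sum_(k < p | (k < f)%N) a k)%:R + f%:R * (2 * p%:R - f%:R + 1) :> R.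
Proof.
move=> H; rewrite big_split /= natr_sum.
by rewrite (sum_ord_lt (fun k : nat => 2 * (p - k)%:R)) // tri.
Qed.

Lemma rhopart n i : (i <= n)%N ->
  2 * dotw n R (rho n R) (xi n i R) = i%:R * (2 * n%:R - i%:R + 1).
Proof.
move=> H; rewrite /dotw mulr_sumr.
transitivity (\sum_(k < n | (k < i)%N) (2 * (n - k)%:R) : R).
  rewrite [RHS]big_mkcond; apply: eq_bigr => k _; rewrite /rho /xi.
  by case: ifP => _; rewrite ?mulr1 ?mulr0.
by rewrite (sum_ord_lt (fun k : nat => 2 * (n - k)%:R)) // tri.
Qed.
End S.
Lemma cl (R : realType) p q a b (k : 'I_p) :
  addw (p + q) R (weight_of p q R a b) (scalew (p + q) R 2 (rho_c p q R)) (lshift q k)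
  = (a k)%:R + 2 * (p - k)%:R.
Proof. by rewrite /addw /scalew wl rcl. Qed.
Lemma cr (R : realType) p q a b (k : 'I_q) :
  addw (p + q) R (weight_of p q R a b) (scalew (p + q) R 2 (rho_c p q R)) (rshift p k)
  = (b k)%:R + 2 * (q - k)%:R.
Proof. by rewrite /addw /scalew wr rcr. Qed.

Lemma key (R : realType) (SA SB p q f g : nat) :
  (2 * p%:R * q%:R - 2 * (p%:R - f%:R) * (q%:R - g%:R) < (SA + SB)%:R :> R) <->
  ((f + g)%N%:R * (2 * (p + q)%N%:R - (f + g)%N%:R + 1) <
   (SA%:R + f%:R * (2 * p%:R - f%:R + 1)) + (SB%:R + g%:R * (2 * q%:R - g%:R + 1)) :> R).
Proof.
rewrite !natrD.
have E : SA%:R + f%:R * (2 * p%:R - f%:R + 1) + (SB%:R + g%:R * (2 * q%:R - g%:R + 1)) -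
   (f%:R + g%:R) * (2 * (p%:R + q%:R) - (f%:R + g%:R) + 1) =
   SA%:R + SB%:R - (2 * p%:R * q%:R - 2 * (p%:R - f%:R) * (q%:R - g%:R)) :> R by ring.
split => H; lra.
Qed.
Theorem proposition2p2 (R : realType) (p q : nat) (a : 'I_p -> nat)
    (b : 'I_q -> nat) :
  (1 <= p)%N -> (p <= q)%N ->
  k_dominant p q R (weight_of p q R a b) ->
  (exists (w : ('I_(p + q) -> R) -> ('I_(p + q) -> R)) (i : nat),
      [/\ W1 p q R w, (1 <= i)%N, (i <= p + q)%N &
        dotw (p + q) R (addw (p + q) R (weight_of p q R a b) (scalew (p + q) R 2 (rho_c p q R))) (w (xi (p + q) i R))
        > 2 * dotw (p + q) R (rho (p + q) R) (xi (p + q) i R)])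
  <->
  (exists f g : nat,
      [/\ (f <= p)%N, (g <= q)%N &
        ((\sum_(i < p | (i < f)%N) a i + \sum_(j < q | (j < g)%N) b j)%:Z
         > 2 * p%:Z * q%:Z - 2 * (p%:Z - f%:Z) * (q%:Z - g%:Z))%R]).
Proof.
move=> hp hpq [Hd Hnn].
set c := addw (p + q) R _ _.
have c0 : forall k, 0 <= c k.
  move=> k; rewrite /c /addw /scalew; apply: addr_ge0 => //.
  by apply: mulr_ge0 => //; rewrite /rho_c; case: ifP.
split.
- case=> w [i [[[s [eps Hw]] _] hi1 hin Hlt]].
  pose f := (\sum_(k < p | (s (lshift q k) < i)%N) 1)%N.
  pose g := (\sum_(k < q | (s (rshift p k) < i)%N) 1)%N.
  have Hfg : (f + g = i)%N.
    rewrite /f /g -(big_split_ord _ (fun k : 'I_(p + q) => (s k < i)%N) (fun _ => 1%N)).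
    rewrite -(reindex_inj (h := s) (P := fun k : 'I_(p + q) => (k < i)%N) (F := fun _ => 1%N) (@perm_inj _ s)).
    by rewrite (sum_ord_ltn (fun _ => 1%N)) // sum_nat_const_nat subn0 muln1.
  have hf : (f <= p)%N by rewrite /f sum1_card (leq_trans (max_card _)) ?card_ord.
  have hg : (g <= q)%N by rewrite /g sum1_card (leq_trans (max_card _)) ?card_ord.
  have H1 : dotw (p + q) R c (w (xi (p + q) i R)) <= \sum_(k < p + q | (s k < i)%N) c k.
    rewrite /dotw [X in _ <= X]big_mkcond; apply: ler_sum => k _; rewrite Hw /xi.
    have := c0 k; case: ifP => _; case: (eps k); rewrite ?expr1 ?expr0; lra.
  rewrite big_split_ord /= in H1.
  have H2 : \sum_(k < p | (s (lshift q k) < i)%N) c (lshift q k) <=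
            \sum_(k < p | (k < f)%N) ((a k)%:R + 2 * (p - k)%:R).
    under eq_bigr => k _ do rewrite /c cl.
    apply: lemA' => i0 j0 hij.
    have := Hd (lshift q i0) (lshift q j0) hij; rewrite /= !ltn_ord !wl => /(_ erefl) h.
    have : ((p - j0)%:R <= (p - i0)%:R :> R) by rewrite ler_nat leq_sub2l.
    lra.
  have H3 : \sum_(k < q | (s (rshift p k) < i)%N) c (rshift p k) <=
            \sum_(k < q | (k < g)%N) ((b k)%:R + 2 * (q - k)%:R).
    under eq_bigr => k _ do rewrite /c cr.
    apply: lemA' => i0 j0 hij.
    have := Hd (rshift p i0) (rshift p j0); rewrite /= leq_add2l !wr => /(_ hij).
    rewrite !ltnNge !leq_addr => /(_ erefl) h.
    have : ((q - j0)%:R <= (q - i0)%:R :> R) by rewrite ler_nat leq_sub2l.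
    lra.
  rewrite xpart // in H2; rewrite xpart // in H3.
  rewrite rhopart // in Hlt.
  exists f, g; split => //.
  rewrite (int_R R) (key R) Hfg.
  lra.
- case=> f [g [hf hg Hineq]].
  have hfg : (0 < f + g)%N.
    case E: (f + g)%N => [|m] //.
    have f0 : f = 0%N by lia.
    have g0 : g = 0%N by lia.
    subst f g; move: Hineq; by rewrite !big_pred0 // !subr0 subrr.
  pose sn k := if (k < p)%N then (if (k < f)%N then k else k + g)%N
               else (if (k - p < g)%N then f + (k - p) else k)%N.
  have sn_lt : forall k : 'I_(p + q), (sn k < p + q)%N.
    by move=> [k hk] /=; rewrite /sn; do ! case: ifP; lia.
  pose so (k : 'I_(p + q)) := Ordinal (sn_lt k).
  have so_inj : injective so.
    move=> [x hx] [y hy] /(congr1 val) /=; rewrite /sn => E; apply: val_inj => /=.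
    by move: E; do ! case: ifP; lia.
  pose s := perm so_inj.
  exists (fun z k => z (s k)), (f + g)%N; split => //.
  + split.
      by exists s, (fun _ => false) => z k; rewrite expr0 mul1r.
    move=> z [Hz1 Hz2]; split => [i j hij hb|k]; last exact: Hz2.
    apply: Hz1; rewrite !permE /= /sn.
    by move: hb hij; do ! case: ifP; lia.
  + by apply: leq_add.
  + rewrite rhopart ?leq_add //.
    have -> : dotw (p + q) R c (fun k => xi (p + q) (f + g) R (s k)) =
      \sum_(k < p | (k < f)%N) ((a k)%:R + 2 * (p - k)%:R) +
      \sum_(k < q | (k < g)%N) ((b k)%:R + 2 * (q - k)%:R).
      rewrite /dotw big_split_ord /=; congr (_ + _).
      * rewrite [RHS]big_mkcond; apply: eq_bigr => k _.
        rewrite /c cl /xi permE /= /sn ltn_ord.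
        have -> : ((if (k < f)%N then (k : nat) else (k + g)%N) < f + g)%N = (k < f)%N.
          by case: ifP => h; apply/idP/idP; lia.
        by case: ifP => _; rewrite ?mulr1 ?mulr0.
      * rewrite [RHS]big_mkcond; apply: eq_bigr => k _.
        rewrite /c cr /xi permE /= /sn (_ : (p + k < p)%N = false) ?addKn; last by rewrite ltnNge leq_addr.
        have -> : ((if (k < g)%N then (f + k)%N else (p + k)%N) < f + g)%N = (k < g)%N.
          by case: ifP => h; apply/idP/idP; lia.
        by case: ifP => _; rewrite ?mulr1 ?mulr0.
    rewrite !xpart //.
    have HR := (int_R R _ _ _ _ _).1 Hineq.
    by rewrite (key R) in HR.
Qed.
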